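(* Let $R$ be a ring with identity and let $a,b,c,y\in R$. Then: (i) If $c$ is regular (i.e. $c=czc$ for some $z\in R$), then $y$ is a left $(b,c)$-inverse of $a$ if and only if $y$ is a right annihilator $(b,c)$-inverse of $a$. (ii) If $b$ is regular (i.e. $b=bzb$ for some $z\in R$), then $y$ is a right $(b,c)$-inverse of $a$ if and only if $y$ is a left annihilator $(b,c)$-inverse of $a$.
   Context: For $x\in R$: $xR=\{xr:r\in R\}$, $Rx=\{rx:r\in R\}$, $x^\circ=\{r\in R: xr=0\}$, ${}^\circ x=\{r\in R: rx=0\}$. An element $y\in R$ is a left $(b,c)$-inverse of $a$ if $Ry\subseteq Rc$ and $yab=b$; a right $(b,c)$-inverse of $a$ if $yR\subseteq bR$ and $cay=c$; a right annihilator $(b,c)$-inverse of $a$ if $c^\circ\subseteq y^\circ$ and $yab=b$; a left annihilator $(b,c)$-inverse of $a$ if ${}^\circ b\subseteq {}^\circ y$ and $cay=c$. *)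

(* Defs.v *)
From mathcomp Require Import all_boot all_algebra.
Set Implicit Arguments. Unset Strict Implicit. Unset Printing Implicit Defensive.
Import GRing.Theory.
Local Open Scope ring_scope.

Definition lideal_sub (R : pzRingType) (y c : R) : Prop :=
  forall r : R, exists s : R, r * y = s * c.
Definition rideal_sub (R : pzRingType) (y b : R) : Prop :=
  forall r : R, exists s : R, y * r = b * s.
Definition rann_sub (R : pzRingType) (c y : R) : Prop :=
  forall r : R, c * r = 0 -> y * r = 0.
Definition lann_sub (R : pzRingType) (b y : R) : Prop :=
  forall r : R, r * b = 0 -> r * y = 0.

Definition left_bc_inverse (R : pzRingType) (a b c y : R) : Prop :=
  lideal_sub y c /\ y * a * b = b.
Definition right_bc_inverse (R : pzRingType) (a b c y : R) : Prop :=
  rideal_sub y b /\ c * a * y = c.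
Definition right_ann_bc_inverse (R : pzRingType) (a b c y : R) : Prop :=
  rann_sub c y /\ y * a * b = b.
Definition left_ann_bc_inverse (R : pzRingType) (a b c y : R) : Prop :=
  lann_sub b y /\ c * a * y = c.

Definition regular (R : pzRingType) (x : R) : Prop := exists z : R, x = x * z * x.

(* Main.v *)
Require Import Defs.
From mathcomp Require Import all_boot all_algebra.
Local Open Scope ring_scope.
Import GRing.Theory.

Theorem proposition2p5 (R : pzRingType) (a b c y : R) :
  (regular c ->
     (left_bc_inverse a b c y <-> right_ann_bc_inverse a b c y)) /\
  (regular b ->
     (right_bc_inverse a b c y <-> left_ann_bc_inverse a b c y)).
Proof.
split=> [[z Hz]|[z Hz]]; split.
- move=> [Hl H]; split=> // r Hr.
  have [s Hs] := Hl 1; rewrite mul1r in Hs.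
  by rewrite Hs -mulrA Hr mulr0.
- move=> [Ha H]; split=> // r.
  have E : c * (1 - z * c) = 0 by rewrite mulrBr mulr1 mulrA -Hz subrr.
  have := Ha _ E; rewrite mulrBr mulr1 => /eqP; rewrite subr_eq0 => /eqP Ey.
  by exists (r * y * z); rewrite -!mulrA -Ey.
- move=> [Hl H]; split=> // r Hr.
  have [s Hs] := Hl 1; rewrite mulr1 in Hs.
  by rewrite Hs mulrA Hr mul0r.
- move=> [Ha H]; split=> // r.
  have E : (1 - b * z) * b = 0 by rewrite mulrBl mul1r -Hz subrr.
  have := Ha _ E; rewrite mulrBl mul1r => /eqP; rewrite subr_eq0 => /eqP Ey.
  by exists (z * y * r); rewrite !mulrA -Ey.
Qed.
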